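(* Let $K\in\mathcal S_2\setminus\{\emptyset,\mathbb R^2\}$ and $u\in S^1$. Then the Steiner symmetral $S_u(K)$ of $K$ in direction $u$ also belongs to $\mathcal S_2$.
   Context: $B(x,r)$ is the closed Euclidean disk. $\mathcal S_2$ is the class of all sets of the form $\bigcap_{x\in A}B(x,1)$ for $A\subseteq\mathbb R^2$. For a convex body $L$ and $u\in S^{1}$, the Steiner symmetral is $S_u(L)=\{x+tu:\ x\in P_{u^\perp}L,\ |t|\le\tfrac{b(x)-a(x)}2\}$, where $L\cap(x+\mathbb Ru)=[x+a(x)u,x+b(x)u]$. *)

(* Defs.v *)
From Stdlib Require Import Reals.
Open Scope R_scope.

Definition pt : Type := (R * R)%type.

Definition unit_disk (x y : pt) : Prop :=
  (fst y - fst x) ^ 2 + (snd y - snd x) ^ 2 <= 1.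

Definition disk_intersection (A : pt -> Prop) : pt -> Prop :=
  fun y => forall x, A x -> unit_disk x y.

Definition in_S2 (K : pt -> Prop) : Prop :=
  exists A : pt -> Prop, forall y, K y <-> disk_intersection A y.

Definition unit_vector (u : pt) : Prop := fst u ^ 2 + snd u ^ 2 = 1.

Definition orthogonal (x u : pt) : Prop := fst x * fst u + snd x * snd u = 0.

Definition shift (x : pt) (t : R) (u : pt) : pt :=
  (fst x + t * fst u, snd x + t * snd u).

Definition steiner (u : pt) (L : pt -> Prop) : pt -> Prop :=
  fun y => exists (x : pt) (t a b : R),
    orthogonal x u /\ a <= b /\
    (forall s, L (shift x s u) <-> a <= s <= b) /\
    Rabs t <= (b - a) / 2 /\
    y = shift x t u.

(* Main.v *)
Require Import Defs.
From Coquelicot Require Import Coquelicot.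
From Stdlib Require Import Reals Lra Psatz Classical.
Require Import Defs.
Open Scope R_scope.

Definition w (x : R) := sqrt (1 - x^2).
Definition T (x : R) := x / sqrt (1 - x^2).
Definition Tp (x : R) := / ((1 - x^2) * sqrt (1 - x^2)).

Lemma sq_pos x : -1 < x < 1 -> 0 < 1 - x^2.
Proof. intros; nra. Qed.

Lemma w_deriv x : -1 < x < 1 -> is_derive w x (- T x).
Proof.
  intros H. pose proof (sq_pos x H) as H1.
  unfold w, T. auto_derive.
  - lra.
  - pose proof (sqrt_lt_R0 _ H1).
    replace (1 + - (x * (x * 1))) with (1 - x^2) by ring.
    field. lra.
Qed.

Lemma T_deriv x : -1 < x < 1 -> is_derive T x (Tp x).
Proof.
  intros H. pose proof (sq_pos x H) as H1.
  pose proof (sqrt_lt_R0 _ H1) as H2.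
  pose proof (sqrt_sqrt _ (Rlt_le _ _ H1)) as H3.
  unfold T, Tp. auto_derive.
  - replace (1 + - (x * (x * 1))) with (1 - x^2) by ring. split; [lra|]. split; [lra|exact I].
  - replace (1 + - (x * (x * 1))) with (1 - x^2) by ring.
    set (s := sqrt (1 - x^2)) in *.
    replace (1 - x^2) with (s*s) by lra.
    transitivity ((s*s + x^2) / (s*s*s)); [field; lra|]. replace (s*s + x^2) with 1 by lra. field; lra.
Qed.

Lemma w_cont x : continuity_pt w x.
Proof.
  apply continuity_pt_filterlim.
  change (continuous (fun y => sqrt (1 - y^2)) x).
  apply continuous_sqrt_comp.
  apply (ex_derive_continuous (K:=R_AbsRing) (V:=R_NormedModule) (fun y => 1 - y^2)). auto_derive. easy.
Qed.

Lemma Tp_pos x : -1 < x < 1 -> 0 < Tp x.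
Proof.
  intros H. pose proof (sq_pos x H) as H1. pose proof (sqrt_lt_R0 _ H1).
  unfold Tp. apply Rinv_0_lt_compat. nra.
Qed.

Lemma T_incr x y : -1 < x -> x < y -> y < 1 -> T x < T y.
Proof.
  intros. apply (incr_function T (-1) 1 Tp).
  - intros z Hz1 Hz2. apply T_deriv. simpl in *; lra.
  - intros z Hz1 Hz2. apply Tp_pos. simpl in *; lra.
  - simpl; lra.
  - lra.
  - simpl; lra.
Qed.

Lemma T_le x y : -1 < x -> x <= y -> y < 1 -> T x <= T y.
Proof.
  intros. destruct (Req_dec x y). subst; lra. left; apply T_incr; lra.
Qed.

Lemma T_le_inv x y : -1 < x < 1 -> -1 < y < 1 -> T x <= T y -> x <= y.
Proof.
  intros. destruct (Rle_lt_dec x y); auto.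
  pose proof (T_incr y x). lra.
Qed.

Lemma T_shift_deriv x P : -1 < x + P < 1 -> is_derive (fun y => T (y+P)) x (Tp (x+P)).
Proof.
  intros H.
  assert (H2 : is_derive (fun y => y + P) x 1) by (auto_derive; [easy|ring]).
  pose proof (is_derive_comp T (fun y => y+P) x (Tp (x+P)) 1 (T_deriv _ H) H2) as H3.
  unfold scal in H3; simpl in H3; unfold mult in H3; simpl in H3.
  rewrite Rmult_1_l in H3. exact H3.
Qed.

Lemma T_cont x : -1 < x < 1 -> continuity_pt T x.
Proof.
  intros H. apply continuity_pt_filterlim.
  apply (ex_derive_continuous (K:=R_AbsRing) (V:=R_NormedModule)).
  eexists. apply T_deriv; lra.
Qed.

Lemma T_shift_cont x P : -1 < x + P < 1 -> continuity_pt (fun y => T (y+P)) x.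
Proof.
  intros H. apply continuity_pt_filterlim.
  change (continuous (fun y => T (y+P)) x).
  apply (ex_derive_continuous (K:=R_AbsRing) (V:=R_NormedModule)).
  eexists. apply T_shift_deriv; lra.
Qed.

Lemma cauchy a b P : -1 < a -> a < b -> b + P < 1 -> 0 <= P ->
  exists c, a <= c <= b /\
   Tp c * (T (b+P) - T (a+P)) = Tp (c+P) * (T b - T a).
Proof.
  intros Ha Hab Hb HP.
  set (k1 := T b - T a). set (k2 := T (b+P) - T (a+P)).
  destruct (MVT_gen (fun x => k1 * T (x+P) - k2 * T x) a b
     (fun x => k1 * Tp (x+P) - k2 * Tp x)) as [c [Hc E]].
  - intros x Hx. rewrite Rmin_left in Hx by lra. rewrite Rmax_right in Hx by lra.
    apply (is_derive_minus (fun x => k1 * T (x+P)) (fun x => k2 * T x)).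
    + apply (is_derive_scal (fun x => T (x+P))). apply T_shift_deriv; lra.
    + apply (is_derive_scal T). apply T_deriv; lra.
  - intros x Hx. rewrite Rmin_left in Hx by lra. rewrite Rmax_right in Hx by lra.
    apply continuity_pt_minus; apply continuity_pt_scal.
    + apply T_shift_cont; lra.
    + apply T_cont; lra.
  - rewrite Rmin_left in Hc by lra. rewrite Rmax_right in Hc by lra.
    exists c. split; auto.
    assert (k1 * Tp (c+P) - k2 * Tp c = 0).
    { apply (Rmult_eq_reg_r (b - a)); [|lra]. rewrite <- E. unfold k1, k2. ring. }
    fold k1 k2. lra.
Qed.

Lemma r_mono c d P : 0 <= P -> -1 < c -> c <= d -> d + P < 1 ->
  (1 - c^2) * (1 - (d+P)^2) <= (1 - d^2) * (1 - (c+P)^2).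
Proof.
  intros HP Hc Hcd Hd.
  assert (E : (1 - d^2) * (1 - (c+P)^2) - (1 - c^2) * (1 - (d+P)^2)
     = P * (d - c) * ((1 + c*(d+P)) + (1 + d*(c+P)))) by ring.
  assert (0 < 1 + c*(d+P)) by nra.
  assert (0 < 1 + d*(c+P)) by nra.
  assert (0 <= P * (d - c)) by nra.
  nra.
Qed.

Lemma R_mono c d P : 0 <= P -> -1 < c -> c <= d -> d + P < 1 ->
  Tp (c+P) * Tp d <= Tp (d+P) * Tp c.
Proof.
  intros HP Hc Hcd Hd.
  set (ac := 1 - c^2). set (ad := 1 - d^2).
  set (bc := 1 - (c+P)^2). set (bd := 1 - (d+P)^2).
  assert (Hac : 0 < ac) by (unfold ac; nra).
  assert (Had : 0 < ad) by (unfold ad; nra).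
  assert (Hbc : 0 < bc) by (unfold bc; nra).
  assert (Hbd : 0 < bd) by (unfold bd; nra).
  assert (Hr : ac * bd <= ad * bc) by (apply r_mono; lra).
  unfold Tp. fold ac ad bc bd.
  pose proof (sqrt_lt_R0 _ Hac). pose proof (sqrt_lt_R0 _ Had).
  pose proof (sqrt_lt_R0 _ Hbc). pose proof (sqrt_lt_R0 _ Hbd).
  assert (Hs : sqrt ac * sqrt bd <= sqrt ad * sqrt bc).
  { rewrite <- !sqrt_mult by lra. apply sqrt_le_1_alt. lra. }
  rewrite <- !Rinv_mult.
  apply Rinv_le_contravar.
  - apply Rmult_lt_0_compat; apply Rmult_lt_0_compat; auto.
  - replace (bd * sqrt bd * (ac * sqrt ac)) with ((ac * bd) * (sqrt ac * sqrt bd)) by ring.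
    replace (bc * sqrt bc * (ad * sqrt ad)) with ((ad * bc) * (sqrt ad * sqrt bc)) by ring.
    apply Rmult_le_compat; try lra.
    apply Rmult_le_pos; lra. apply Rmult_le_pos; lra.
Qed.

Lemma inner x1 x0 x2 P : -1 < x1 -> x1 < x0 -> x0 < x2 -> 0 <= P -> x2 + P < 1 ->
  T x0 - T x1 = T x2 - T x0 -> 2 * T (x0 + P) <= T (x1+P) + T (x2+P).
Proof.
  intros H1 H10 H02 HP H2 E.
  destruct (cauchy x1 x0 P) as [c1 [Hc1 E1]]; try lra.
  destruct (cauchy x0 x2 P) as [c2 [Hc2 E2]]; try lra.
  assert (HD : 0 < T x0 - T x1) by (pose proof (T_incr x1 x0); lra).
  pose proof (Tp_pos c1 ltac:(lra)). pose proof (Tp_pos c2 ltac:(lra)).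
  pose proof (R_mono c1 c2 P HP ltac:(lra) ltac:(lra) ltac:(lra)).
  set (D := T x0 - T x1) in *.
  rewrite <- E in E2.
  (* g0 - g1 = D * Tp(c1+P)/Tp c1 ; g2 - g0 = D * Tp(c2+P)/Tp c2 *)
  assert (Tp c1 * Tp c2 * (T (x0+P) - T (x1+P)) <= Tp c1 * Tp c2 * (T (x2+P) - T (x0+P))).
  { replace (Tp c1 * Tp c2 * (T (x0+P) - T (x1+P))) with (Tp c2 * (Tp (c1+P) * D)) by (rewrite <- E1; ring).
    replace (Tp c1 * Tp c2 * (T (x2+P) - T (x0+P))) with (Tp c1 * (Tp (c2+P) * D)) by (rewrite <- E2; ring).
    nra. }
  assert (0 < Tp c1 * Tp c2) by (apply Rmult_lt_0_compat; lra).
  nra.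
Qed.

Lemma w_shift_deriv x P : -1 < x + P < 1 -> is_derive (fun y => w (y+P)) x (- T (x+P)).
Proof.
  intros H.
  assert (H2 : is_derive (fun y => y + P) x 1) by (auto_derive; [easy|ring]).
  pose proof (is_derive_comp w (fun y => y+P) x (- T (x+P)) 1 (w_deriv _ H) H2) as H3.
  unfold scal in H3; simpl in H3; unfold mult in H3; simpl in H3.
  rewrite Rmult_1_l in H3. exact H3.
Qed.

Lemma w_shift_cont x P : continuity_pt (fun y => w (y+P)) x.
Proof.
  apply (continuity_pt_comp (fun y => y + P) w).
  - apply continuity_pt_plus. apply continuity_pt_id. apply continuity_pt_const. intros a b; auto.
  - apply w_cont.
Qed.

Lemma inner_any p1 p2 p c : -1 < p1 < 1 -> -1 < p2 < 1 -> -1 < p < 1 ->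
  T p = (T p1 + T p2) / 2 -> 0 <= c -> p1 + c < 1 -> p2 + c < 1 ->
  2 * T (p + c) <= T (p1 + c) + T (p2 + c).
Proof.
  intros H1 H2 H E Hc Hc1 Hc2.
  destruct (Rtotal_order p1 p2) as [Hlt|[Heq|Hgt]].
  - pose proof (T_incr p1 p2 ltac:(lra) Hlt ltac:(lra)).
    assert (p1 < p).
    { destruct (Rle_lt_dec p p1); auto. pose proof (T_le p p1 ltac:(lra) r ltac:(lra)). lra. }
    assert (p < p2).
    { destruct (Rle_lt_dec p2 p); auto. pose proof (T_le p2 p ltac:(lra) r ltac:(lra)). lra. }
    apply inner; try lra.
  - subst p2.
    assert (T p = T p1) by lra.
    assert (p = p1).
    { apply Rle_antisym; apply T_le_inv; lra. }
    subst. lra.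
  - pose proof (T_incr p2 p1 ltac:(lra) Hgt ltac:(lra)).
    assert (p2 < p).
    { destruct (Rle_lt_dec p p2); auto. pose proof (T_le p p2 ltac:(lra) r ltac:(lra)). lra. }
    assert (p < p1).
    { destruct (Rle_lt_dec p1 p); auto. pose proof (T_le p1 p ltac:(lra) r ltac:(lra)). lra. }
    replace (T (p1+c) + T (p2+c)) with (T (p2+c) + T (p1+c)) by ring. apply inner; try lra.
Qed.

Lemma p_between p1 p2 p : -1 < p1 < 1 -> -1 < p2 < 1 -> -1 < p < 1 ->
  T p = (T p1 + T p2) / 2 -> Rmin p1 p2 <= p <= Rmax p1 p2.
Proof.
  intros H1 H2 H E.
  unfold Rmin, Rmax. destruct (Rle_dec p1 p2).
  - pose proof (T_le p1 p2 ltac:(lra) r ltac:(lra)).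
    split; apply T_le_inv; lra.
  - pose proof (T_le p2 p1 ltac:(lra) ltac:(lra) ltac:(lra)).
    split; apply T_le_inv; lra.
Qed.

Lemma outer p1 p2 p P : -1 < p1 < 1 -> -1 < p2 < 1 -> -1 < p < 1 ->
  T p = (T p1 + T p2) / 2 -> 0 <= P -> p1 + P <= 1 -> p2 + P <= 1 ->
  w (p1+P) + w (p2+P) - 2 * w (p+P) <= w p1 + w p2 - 2 * w p.
Proof.
  intros H1 H2 H E HP HP1 HP2.
  pose proof (p_between p1 p2 p H1 H2 H E) as Hb.
  assert (Hpm : p <= p1 \/ p <= p2).
  { unfold Rmax in Hb. destruct (Rle_dec p1 p2); lra. }
  destruct (Req_dec P 0) as [->|HP0].
  { rewrite !Rplus_0_r. lra. }
  set (G := fun y => w (y + p1) + w (y + p2) - 2 * w (y + p)).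
  set (f := fun c => - T (c+p1) - T (c+p2) + 2 * T (c+p)).
  destruct (MVT_gen G 0 P (fun c => Rmin 0 (f c))) as [c [Hc EG]].
  - intros x Hx. rewrite Rmin_left in Hx by lra. rewrite Rmax_right in Hx by lra.
    assert (Hf : f x <= 0).
    { unfold f. rewrite !(Rplus_comm x).
      pose proof (inner_any p1 p2 p x H1 H2 H E ltac:(lra) ltac:(lra) ltac:(lra)). lra. }
    rewrite Rmin_right by lra.
    unfold G, f.
    replace (- T (x+p1) - T (x+p2) + 2 * T (x+p)) with ((- T (x+p1) + - T (x+p2)) - 2 * - T (x+p)) by ring.
    apply (is_derive_minus (fun y => w (y+p1) + w (y+p2)) (fun y => 2 * w (y+p))).
    apply (is_derive_plus (fun y => w (y+p1)) (fun y => w (y+p2))).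
    apply w_shift_deriv; lra. apply w_shift_deriv; lra.
    apply (is_derive_scal (fun y => w (y+p))). apply w_shift_deriv. destruct Hpm; lra.
  - intros x Hx. unfold G.
    apply continuity_pt_minus. apply continuity_pt_plus; apply w_shift_cont.
    apply continuity_pt_scal. apply w_shift_cont.
  - assert (Rmin 0 (f c) <= 0) by apply Rmin_l.
    unfold G in EG. rewrite !(Rplus_comm P), !Rplus_0_l in EG.
    nra.
Qed.

Lemma w_pos x : -1 < x < 1 -> 0 < w x.
Proof. intros H. unfold w. apply sqrt_lt_R0. nra. Qed.

Lemma w_sq x : -1 <= x <= 1 -> (w x)^2 = 1 - x^2.
Proof. intros H. unfold w. rewrite pow2_sqrt; nra. Qed.

Lemma w_nonneg x : 0 <= w x.
Proof. apply sqrt_pos. Qed.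

Lemma w_opp x : w (- x) = w x.
Proof. unfold w. f_equal. ring. Qed.

Lemma T_opp x : T (- x) = - T x.
Proof. unfold T. replace ((-x)^2) with (x^2) by ring. unfold Rdiv. ring. Qed.

Lemma T_w x : T x = x / w x.
Proof. reflexivity. Qed.

Lemma w_of_sq x y : x^2 + y^2 = 1 -> 0 <= y -> w x = y.
Proof. intros H Hy. unfold w. replace (1 - x^2) with (y^2) by lra. apply sqrt_pow2; auto. Qed.

Definition Nrm p1 p2 := sqrt ((p1 * w p2 + p2 * w p1)^2 + 4 * (w p1)^2 * (w p2)^2).
Definition dp p1 p2 := (p1 * w p2 + p2 * w p1) / Nrm p1 p2.
Definition dq p1 p2 := 2 * w p1 * w p2 / Nrm p1 p2.

Lemma Nrm_facts p1 p2 : -1 < p1 < 1 -> -1 < p2 < 1 ->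
  0 < Nrm p1 p2 /\ (Nrm p1 p2)^2 = (p1 * w p2 + p2 * w p1)^2 + 4 * (w p1)^2 * (w p2)^2.
Proof.
  intros H1 H2. pose proof (w_pos _ H1). pose proof (w_pos _ H2).
  assert (0 < (p1 * w p2 + p2 * w p1)^2 + 4 * (w p1)^2 * (w p2)^2).
  { assert (0 < (w p1 * w p2)^2) by (apply pow_lt; apply Rmult_lt_0_compat; assumption). assert (0 <= (p1 * w p2 + p2 * w p1)^2) by apply pow2_ge_0. replace (4 * w p1 ^ 2 * w p2 ^ 2) with (4 * (w p1 * w p2)^2) by ring. lra. }
  split. unfold Nrm. apply sqrt_lt_R0; auto.
  unfold Nrm. rewrite pow2_sqrt; lra.
Qed.

Lemma dir_main p1 p2 : -1 < p1 < 1 -> -1 < p2 < 1 ->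
  (dp p1 p2)^2 + (dq p1 p2)^2 = 1 /\ 0 < dq p1 p2 /\ -1 < dp p1 p2 < 1 /\
  w (dp p1 p2) = dq p1 p2 /\ T (dp p1 p2) = (T p1 + T p2) / 2 /\
  (forall t, t <= w p1 -> t <= w p2 -> t <= dq p1 p2).
Proof.
  intros H1 H2. destruct (Nrm_facts p1 p2 H1 H2) as [HN HN2].
  pose proof (w_pos _ H1) as W1. pose proof (w_pos _ H2) as W2.
  pose proof (w_sq p1 ltac:(lra)) as S1. pose proof (w_sq p2 ltac:(lra)) as S2.
  set (N := Nrm p1 p2) in *. set (a := w p1) in *. set (b := w p2) in *.
  assert (E : (dp p1 p2)^2 + (dq p1 p2)^2 = 1).
  { transitivity (((p1*b+p2*a)^2 + 4*a^2*b^2) / N^2). unfold dp, dq; fold N a b; field; lra. rewrite <- HN2. field. lra. }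
  assert (Q : 0 < dq p1 p2).
  { unfold dq. fold N a b. apply Rdiv_lt_0_compat; nra. }
  assert (Wd : w (dp p1 p2) = dq p1 p2) by (apply w_of_sq; lra).
  repeat split; auto.
  - nra.
  - nra.
  - rewrite T_w, Wd, !T_w. fold a b. unfold dp, dq. fold N a b. field. lra.
  - intros t Ht1 Ht2.
    assert (K : forall x y X Y, -1 < x < 1 -> -1 < y < 1 -> 0 < X -> 0 < Y -> X^2 = 1 - x^2 -> Y^2 = 1 - y^2 -> X <= Y ->
               X * sqrt ((x * Y + y * X)^2 + 4 * X^2 * Y^2) <= 2 * X * Y).
    { intros x y X Y Hx Hy HX HY SX SY XY.
      assert (Hy2 : y^2 <= x^2) by nra.
      assert (Hab : (x*Y + y*X)^2 <= 4 * (x*Y)^2).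
      { assert ((y*X)^2 <= (x*Y)^2).
        { replace ((y*X)^2) with (y^2 * X^2) by ring. replace ((x*Y)^2) with (x^2*Y^2) by ring.
          apply Rmult_le_compat; nra. }
        nra. }
      assert (sqrt ((x * Y + y * X)^2 + 4 * X^2 * Y^2) <= 2 * Y).
      { rewrite <- (sqrt_pow2 (2*Y)) by lra. apply sqrt_le_1_alt. nra. }
      nra. }
    unfold dq. fold N a b.
    apply (Rmult_le_reg_r N); [lra|]. unfold Rdiv. rewrite Rmult_assoc, Rinv_l, Rmult_1_r by lra.
    destruct (Rle_dec a b).
    + pose proof (K p1 p2 a b H1 H2 W1 W2 S1 S2 r) as Hk.
      change (a * N <= 2 * a * b) in Hk.
      assert (t * N <= a * N) by (apply Rmult_le_compat_r; lra). lra.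
    + pose proof (K p2 p1 b a H2 H1 W2 W1 S2 S1 ltac:(lra)) as Hk.
      replace ((p2 * a + p1 * b)^2 + 4 * b^2 * a^2) with ((p1 * b + p2 * a)^2 + 4 * a^2 * b^2) in Hk by ring.
      change (b * N <= 2 * b * a) in Hk.
      assert (t * N <= b * N) by (apply Rmult_le_compat_r; lra). lra.
Qed.

Lemma key_main p1 p2 P : -1 < p1 < 1 -> -1 < p2 < 1 ->
  -1 <= p1 + P <= 1 -> -1 <= p2 + P <= 1 ->
  -1 <= dp p1 p2 + P <= 1 /\
  w (p1+P) + w (p2+P) - w p1 - w p2 <= 2 * (w (dp p1 p2 + P) - dq p1 p2).
Proof.
  intros H1 H2 HP1 HP2.
  destruct (dir_main p1 p2 H1 H2) as [E [Q [Hd [Wd [Td _]]]]].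
  pose proof (p_between p1 p2 _ H1 H2 Hd Td) as Hb.
  set (p := dp p1 p2) in *. set (q := dq p1 p2) in *.
  split.
  { unfold Rmin, Rmax in Hb. destruct (Rle_dec p1 p2); lra. }
  destruct (Rle_lt_dec 0 P).
  - pose proof (outer p1 p2 p P H1 H2 Hd Td r ltac:(lra) ltac:(lra)). lra.
  - assert (Td' : T (-p) = (T (-p1) + T (-p2)) / 2) by (rewrite !T_opp; lra).
    pose proof (outer (-p1) (-p2) (-p) (-P) ltac:(lra) ltac:(lra) ltac:(lra) Td' ltac:(lra) ltac:(lra) ltac:(lra)) as HO.
    replace (-p1 + -P) with (-(p1+P)) in HO by ring.
    replace (-p2 + -P) with (-(p2+P)) in HO by ring.
    replace (-p + -P) with (-(p+P)) in HO by ring.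
    rewrite !w_opp in HO. lra.
Qed.

Lemma deg e x P : e^2 = 1 -> -1 <= x <= 1 -> -1 <= x + P <= 1 -> -1 <= e + P <= 1 ->
  w (x+P) - w x <= w (e+P).
Proof.
  intros He Hx HxP HeP.
  assert (Hsum : w (x+P) <= w x + w (e+P)).
  { pose proof (w_nonneg x). pose proof (w_nonneg (e+P)).
    pose proof (w_sq x Hx) as S1. pose proof (w_sq (e+P) HeP) as S2.
    unfold w at 1. rewrite <- (sqrt_pow2 (w x + w (e+P))) by lra.
    apply sqrt_le_1_alt.
    assert (e = 1 \/ e = -1) by (destruct (Rle_lt_dec 0 e); [left|right]; nra).
    assert (0 <= w x * w (e+P)) by (apply Rmult_le_pos; auto).
    destruct H1; subst e; nra. }
  lra.
Qed.

Definition dirp p1 p2 := if Rlt_dec 0 (w p1) then (if Rlt_dec 0 (w p2) then dp p1 p2 else p2) else p1.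
Definition dirq p1 p2 := if Rlt_dec 0 (w p1) then (if Rlt_dec 0 (w p2) then dq p1 p2 else 0) else 0.

Lemma w_case x : -1 <= x <= 1 -> (0 < w x -> -1 < x < 1) /\ (~ 0 < w x -> w x = 0 /\ x^2 = 1).
Proof.
  intros H. pose proof (w_sq x H). pose proof (w_nonneg x).
  split.
  - intros. assert (0 < (w x)^2) by (apply pow_lt; auto). nra.
  - intros. assert (w x = 0) by lra. split; auto. rewrite H3 in H0. lra.
Qed.

Lemma key_gen p1 p2 : -1 <= p1 <= 1 -> -1 <= p2 <= 1 ->
  (dirp p1 p2)^2 + (dirq p1 p2)^2 = 1 /\ 0 <= dirq p1 p2 /\
  (forall t, t <= w p1 -> t <= w p2 -> t <= dirq p1 p2) /\
  (forall P, -1 <= p1 + P <= 1 -> -1 <= p2 + P <= 1 ->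
     -1 <= dirp p1 p2 + P <= 1 /\
     w (p1+P) + w (p2+P) - w p1 - w p2 <= 2 * (w (dirp p1 p2 + P) - dirq p1 p2)).
Proof.
  intros H1 H2. destruct (w_case p1 H1) as [A1 B1]. destruct (w_case p2 H2) as [A2 B2].
  unfold dirp, dirq.
  destruct (Rlt_dec 0 (w p1)) as [h1|h1]; [destruct (Rlt_dec 0 (w p2)) as [h2|h2]|].
  - specialize (A1 h1). specialize (A2 h2).
    destruct (dir_main p1 p2 A1 A2) as [E [Q [Hd [Wd [Td Hm]]]]].
    split; [lra|]. split; [lra|]. split; [exact Hm|].
    intros P HP1 HP2. apply key_main; auto.
  - destruct (B2 h2) as [W2 S2].
    split; [lra|]. split; [lra|]. split; [intros; lra|].
    intros P HP1 HP2. split; auto.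
    pose proof (deg p2 p1 P S2 H1 HP1 HP2). lra.
  - destruct (B1 h1) as [W1 S1].
    split; [lra|]. split; [lra|]. split; [intros; lra|].
    intros P HP1 HP2. split; auto.
    pose proof (deg p1 p2 P S1 H2 HP2 HP1). lra.
Qed.

Definition Pair sa ta sb tb s t :=
  (s - sa)^2 <= 1 /\ (s - sb)^2 <= 1 /\ 2 * Rabs t <= ta - tb + w (s - sa) + w (s - sb).

Lemma sq_le1 x : x^2 <= 1 -> -1 <= x <= 1.
Proof. intros; nra. Qed.

Lemma disk_case sa ta s0 t0 : ~ Pair sa ta sa ta s0 t0 ->
  (forall s t, Pair sa ta sa ta s t -> (s - sa)^2 + (t - 0)^2 <= 1) /\
  (s0 - sa)^2 + (t0 - 0)^2 > 1.
Proof.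
  intros Hn. split.
  - intros s t [Hs [_ Ht]].
    pose proof (w_sq (s - sa) (sq_le1 _ Hs)). pose proof (w_nonneg (s - sa)).
    assert (Rabs t <= w (s - sa)) by lra.
    assert (t^2 <= (w (s-sa))^2).
    { rewrite <- (Rsqr_pow2), <- Rsqr_pow2. apply Rsqr_le_abs_1. rewrite (Rabs_right (w _)); lra. }
    nra.
  - destruct (Rle_lt_dec ((s0 - sa)^2) 1) as [Hs|Hs].
    + assert (Ht : 2 * Rabs t0 > ta - ta + w (s0 - sa) + w (s0 - sa)).
      { destruct (Rle_lt_dec (2 * Rabs t0) (ta - ta + w (s0 - sa) + w (s0 - sa))); [|lra].
        exfalso. apply Hn. repeat split; auto. }
      pose proof (w_sq (s0 - sa) (sq_le1 _ Hs)). pose proof (w_nonneg (s0 - sa)).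
      assert (Rabs t0 > w (s0 - sa)) by lra.
      assert ((w (s0-sa))^2 < t0^2).
      { rewrite <- (Rsqr_pow2), <- Rsqr_pow2. apply Rsqr_lt_abs_1. rewrite (Rabs_right (w _)); lra. }
      nra.
    + assert (0 <= (t0 - 0)^2) by apply pow2_ge_0. lra.
Qed.

Lemma sq_bound t c W : Rabs t <= c + W -> c <= 0 -> 0 <= W -> (t - c)^2 <= W^2 /\ (t + c)^2 <= W^2.
Proof.
  intros H Hc HW. unfold Rabs in H. destruct (Rcase_abs t); split; nra.
Qed.

Lemma lens sa ta sb tb s0 t0 : ~ Pair sa ta sb tb s0 t0 -> exists cs ct,
  (forall s t, Pair sa ta sa ta s t -> Pair sb tb sb tb s t -> Pair sa ta sb tb s t ->
      (s - cs)^2 + (t - ct)^2 <= 1) /\ (s0 - cs)^2 + (t0 - ct)^2 > 1.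
Proof.
  intros Hn.
  destruct (classic (Pair sa ta sa ta s0 t0)) as [Ha|Ha].
  2:{ destruct (disk_case sa ta s0 t0 Ha) as [C E]. exists sa, 0. split; auto. }
  destruct (classic (Pair sb tb sb tb s0 t0)) as [Hb|Hb].
  2:{ destruct (disk_case sb tb s0 t0 Hb) as [C E]. exists sb, 0. split; auto. }
  destruct Ha as [Ha1 [_ Ha3]]. destruct Hb as [Hb1 [_ Hb3]].
  set (p1 := s0 - sa) in *. set (p2 := s0 - sb) in *.
  assert (Hlt : 2 * Rabs t0 > ta - tb + w p1 + w p2).
  { destruct (Rle_lt_dec (2 * Rabs t0) (ta - tb + w p1 + w p2)); [|lra].
    exfalso. apply Hn. repeat split; auto. }
  destruct (key_gen p1 p2 (sq_le1 _ Ha1) (sq_le1 _ Hb1)) as [E [Q [Hm K]]].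
  set (p := dirp p1 p2) in *. set (q := dirq p1 p2) in *.
  set (H0 := (ta - tb + w p1 + w p2) / 2).
  assert (Hq : Rabs t0 <= q) by (apply Hm; lra).
  set (c := H0 - q).
  assert (Hc : c < 0) by (unfold c, H0; lra).
  exists (s0 - p), (if Rle_dec 0 t0 then c else - c).
  split.
  - intros s t _ _ [Hs1 [Hs2 Hs3]].
    set (P := s - s0).
    assert (e1 : s - sa = p1 + P) by (unfold p1, P; ring).
    assert (e2 : s - sb = p2 + P) by (unfold p2, P; ring).
    rewrite e1 in Hs1, Hs3. rewrite e2 in Hs2, Hs3.
    destruct (K P (sq_le1 _ Hs1) (sq_le1 _ Hs2)) as [Hr Hk].
    assert (Habs : Rabs t <= c + w (p + P)) by (unfold c, H0; lra).
    pose proof (w_nonneg (p + P)).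
    destruct (sq_bound t c (w (p+P)) Habs ltac:(lra) ltac:(lra)) as [B1 B2].
    rewrite (w_sq _ Hr) in B1, B2.
    replace (s - (s0 - p)) with (p + P) by (unfold P; ring).
    destruct (Rle_dec 0 t0).
    + lra.
    + replace (t - - c) with (t + c) by ring. lra.
  - replace (s0 - (s0 - p)) with p by ring.
    assert (H0 < Rabs t0) by (unfold H0; lra).
    destruct (Rle_dec 0 t0).
    + rewrite Rabs_right in * by lra.
      assert (q < t0 - c) by (unfold c; lra). nra.
    + rewrite Rabs_left in * by lra.
      assert (q < - t0 - c) by (unfold c; lra).
      replace (t0 - - c) with (- (-t0 - c)) by ring. nra.
Qed.


Definition scc (u z : pt) := - snd u * fst z + fst u * snd z.
Definition tcc (u z : pt) := fst u * fst z + snd u * snd z.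

Lemma disk_coord u x y : unit_vector u ->
  (unit_disk x y <-> (scc u y - scc u x)^2 + (tcc u y - tcc u x)^2 <= 1).
Proof.
  intros Hu. unfold unit_vector in Hu. unfold unit_disk, scc, tcc.
  replace ((- snd u * fst y + fst u * snd y - (- snd u * fst x + fst u * snd x))^2 +
           (fst u * fst y + snd u * snd y - (fst u * fst x + snd u * snd x))^2)
    with ((fst u ^2 + snd u ^2) * ((fst y - fst x)^2 + (snd y - snd x)^2)) by ring.
  rewrite Hu, Rmult_1_l. tauto.
Qed.

Lemma abs_le_w X Y : X^2 + Y^2 <= 1 -> Rabs Y <= w X.
Proof.
  intros H. unfold w. rewrite <- sqrt_Rsqr_abs. apply sqrt_le_1_alt. unfold Rsqr. nra.
Qed.

Lemma w_le_iff X Y c : X^2 <= 1 -> (X^2 + (Y - c)^2 <= 1 <-> c - w X <= Y <= c + w X).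
Proof.
  intros H. split.
  - intros H2. pose proof (abs_le_w X (Y - c) H2). unfold Rabs in H0. destruct (Rcase_abs (Y - c)); lra.
  - intros H2. pose proof (w_sq X (sq_le1 _ H)). pose proof (w_nonneg X).
    assert ((Y - c)^2 <= (w X)^2) by nra. lra.
Qed.

Lemma abs_split X W : Rabs X <= W -> -W <= X <= W.
Proof. unfold Rabs. destruct (Rcase_abs X); intros; lra. Qed.

Lemma st_imp (K : pt -> Prop) (A : pt -> Prop) u y :
  unit_vector u -> (forall z, K z <-> disk_intersection A z) ->
  steiner u K y -> forall a b, A a -> A b ->
  Pair (scc u a) (tcc u a) (scc u b) (tcc u b) (scc u y) (tcc u y).
Proof.
  intros Hu HK [x [t [a0 [b0 [Ho [Hab [Hc [Ht Hy]]]]]]]] a b Ha Hb.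
  unfold unit_vector in Hu. unfold orthogonal in Ho.
  assert (Es : forall s, scc u (shift x s u) = scc u x).
  { intros s. unfold scc, shift; simpl. ring. }
  assert (Et : forall s, tcc u (shift x s u) = s).
  { intros s. unfold tcc, shift; simpl. unfold tcc. 
    replace (fst u * (fst x + s * fst u) + snd u * (snd x + s * snd u))
      with ((fst x * fst u + snd x * snd u) + s * (fst u ^2 + snd u^2)) by ring.
    rewrite Ho, Hu. ring. }
  assert (Kb : K (shift x b0 u)) by (apply Hc; lra).
  assert (Ka : K (shift x a0 u)) by (apply Hc; lra).
  apply HK in Kb. apply HK in Ka.
  specialize (Kb a Ha). specialize (Ka b Hb).
  apply (disk_coord u) in Kb; auto. apply (disk_coord u) in Ka; auto.
  rewrite Es, Et in Ka, Kb. subst y. rewrite Es, Et.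
  assert (H1 : (scc u x - scc u a)^2 <= 1) by (pose proof (pow2_ge_0 (b0 - tcc u a)); lra).
  assert (H2 : (scc u x - scc u b)^2 <= 1) by (pose proof (pow2_ge_0 (a0 - tcc u b)); lra).
  pose proof (abs_le_w _ _ Kb). pose proof (abs_le_w _ _ Ka).
  apply abs_split in H. apply abs_split in H0.
  unfold Pair.
  split; auto. split; auto. lra.
Qed.

Lemma st_back (K : pt -> Prop) (A : pt -> Prop) u y :
  unit_vector u -> (forall z, K z <-> disk_intersection A z) ->
  (exists a, A a) ->
  (forall a b, A a -> A b -> Pair (scc u a) (tcc u a) (scc u b) (tcc u b) (scc u y) (tcc u y)) ->
  steiner u K y.
Proof.
  intros Hu HK [a1 Ha1] HP. pose proof Hu as Hu'. unfold unit_vector in Hu.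
  set (s0 := scc u y). set (t0 := tcc u y).
  set (W := fun a => w (s0 - scc u a)).
  set (L := fun r => exists a, A a /\ r = tcc u a - W a).
  set (NU := fun r => exists a, A a /\ r = - (tcc u a + W a)).
  assert (HPab : forall a b, A a -> A b -> tcc u b - W b <= tcc u a + W a - 2 * Rabs t0).
  { intros a b Ha Hb. destruct (HP a b Ha Hb) as [_ [_ H]]. unfold W. fold s0 t0 in H. lra. }
  destruct (completeness L) as [a0 [Ha0u Ha0l]].
  { exists (tcc u a1 + W a1). intros r [b [Hb ->]]. pose proof (HPab a1 b Ha1 Hb).
    pose proof (Rabs_pos t0). lra. }
  { exists (tcc u a1 - W a1), a1; auto. }
  destruct (completeness NU) as [nb0 [Hnbu Hnbl]].
  { exists (- (tcc u a1 - W a1)). intros r [b [Hb ->]]. pose proof (HPab b a1 Hb Ha1).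
    pose proof (Rabs_pos t0). lra. }
  { exists (- (tcc u a1 + W a1)), a1; auto. }
  set (b0 := - nb0).
  assert (HLa : forall a, A a -> tcc u a - W a <= a0) by (intros a Ha; apply Ha0u; exists a; auto).
  assert (HUa : forall a, A a -> b0 <= tcc u a + W a).
  { intros a Ha. assert (- (tcc u a + W a) <= nb0) by (apply Hnbu; exists a; auto). unfold b0; lra. }
  assert (Hgap : a0 + 2 * Rabs t0 <= b0).
  { assert (forall a, A a -> a0 <= tcc u a + W a - 2 * Rabs t0).
    { intros a Ha. apply Ha0l. intros r [b [Hb ->]]. apply HPab; auto. }
    assert (nb0 <= - (a0 + 2 * Rabs t0)).
    { apply Hnbl. intros r [b [Hb ->]]. pose proof (H b Hb). lra. }
    unfold b0; lra. }
  exists (s0 * - snd u, s0 * fst u), t0, a0, b0.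
  assert (Es : forall s, scc u (shift (s0 * - snd u, s0 * fst u) s u) = s0).
  { intros s. unfold scc, shift; simpl.
    replace (- snd u * (s0 * - snd u + s * fst u) + fst u * (s0 * fst u + s * snd u))
      with (s0 * (fst u ^2 + snd u^2)) by ring. rewrite Hu. ring. }
  assert (Et : forall s, tcc u (shift (s0 * - snd u, s0 * fst u) s u) = s).
  { intros s. unfold tcc, shift; simpl.
    replace (fst u * (s0 * - snd u + s * fst u) + snd u * (s0 * fst u + s * snd u))
      with (s * (fst u ^2 + snd u^2)) by ring. rewrite Hu. ring. }
  pose proof (Rabs_pos t0).
  split; [unfold orthogonal; simpl; ring|].
  split; [lra|].
  split.
  - intros s. rewrite HK. unfold disk_intersection. split.
    + intros Hd. split.
      * apply Ha0l. intros r [a [Ha ->]]. specialize (Hd a Ha).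
        apply (disk_coord u) in Hd; auto. rewrite Es, Et in Hd.
        destruct (HP a a Ha Ha) as [Hs _]. fold s0 in Hs.
        apply (w_le_iff _ _ _ Hs) in Hd. unfold W; lra.
      * assert (nb0 <= - s).
        { apply Hnbl. intros r [a [Ha ->]]. specialize (Hd a Ha).
          apply (disk_coord u) in Hd; auto. rewrite Es, Et in Hd.
          destruct (HP a a Ha Ha) as [Hs _]. fold s0 in Hs.
          apply (w_le_iff _ _ _ Hs) in Hd. unfold W; lra. }
        unfold b0; lra.
    + intros Hs a Ha. apply (disk_coord u); auto. rewrite Es, Et.
      destruct (HP a a Ha Ha) as [Hs2 _]. fold s0 in Hs2.
      apply (w_le_iff _ _ _ Hs2).
      pose proof (HLa a Ha). pose proof (HUa a Ha). unfold W in *. lra.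
  - split; [lra|].
    unfold shift; simpl. destruct y as [y1 y2]. unfold s0, t0, scc, tcc; simpl.
    f_equal.
    + replace (- snd u * y1 + fst u * y2) with (- snd u * y1 + fst u * y2) by ring.
      transitivity (y1 * (fst u ^2 + snd u ^2)); [rewrite Hu; ring| ring].
    + transitivity (y2 * (fst u ^2 + snd u ^2)); [rewrite Hu; ring| ring].
Qed.

Theorem theorem5p12 (K : pt -> Prop) (u : pt) :
  in_S2 K ->
  (exists y, K y) ->
  (exists y, ~ K y) ->
  unit_vector u ->
  in_S2 (steiner u K).
Proof.
  intros [A HK] _ [y0 Hy0] Hu.
  assert (HA : exists a, A a).
  { apply NNPP. intros Hn. apply Hy0. apply HK. intros x Hx. exfalso. apply Hn. exists x; auto. }
  exists (fun c => forall z, steiner u K z -> unit_disk c z).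
  intros y. split.
  - intros Hy c Hc. apply Hc; auto.
  - intros Hall. apply NNPP. intros Hn.
    assert (Hp : ~ (forall a b, A a -> A b ->
        Pair (scc u a) (tcc u a) (scc u b) (tcc u b) (scc u y) (tcc u y))).
    { intros H. apply Hn. eapply st_back; eauto. }
    apply not_all_ex_not in Hp. destruct Hp as [a Hp].
    apply not_all_ex_not in Hp. destruct Hp as [b Hp].
    apply imply_to_and in Hp. destruct Hp as [Ha Hp].
    apply imply_to_and in Hp. destruct Hp as [Hb Hp].
    destruct (lens _ _ _ _ _ _ Hp) as [cs [ct [Hin Hout]]].
    set (c := (cs * - snd u + ct * fst u, cs * fst u + ct * snd u)).
    pose proof Hu as Hu'. unfold unit_vector in Hu'.
    assert (Ecs : scc u c = cs).
    { unfold scc, c; simpl.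
      transitivity (cs * (fst u ^2 + snd u^2)); [ring|rewrite Hu'; ring]. }
    assert (Ect : tcc u c = ct).
    { unfold tcc, c; simpl.
      transitivity (ct * (fst u ^2 + snd u^2)); [ring|rewrite Hu'; ring]. }
    assert (Hc : forall z, steiner u K z -> unit_disk c z).
    { intros z Hz. apply (disk_coord u); auto. rewrite Ecs, Ect.
      apply Hin; eapply st_imp; eauto. }
    specialize (Hall c Hc). apply (disk_coord u) in Hall; auto.
    rewrite Ecs, Ect in Hall. lra.
Qed.
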